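(* Let $G$ be a finite simple graph with no isolated vertex, and let $k$ be an integer with $2<k\leq\nu(G)$. Then $I(G)^{[k]}:I(G)^{[2]}=I(G)^{[k]}$.
   Context: Vertices of $G$ are identified with the variables of $S=K[x_1,\ldots,x_n]$ ($K$ a field), edges with degree-2 monomials. $I(G)^{[k]}$ is the ideal generated by all products $e_1\cdots e_k$ over $k$-matchings of $G$. $\nu(G)$ is the matching number of $G$. *)

(* Defs.v *)
From HB Require Import structures.
From mathcomp Require Import all_boot all_order all_algebra.
Set Implicit Arguments. Unset Strict Implicit. Unset Printing Implicit Defensive.
Import GRing.Theory.
Local Open Scope ring_scope.

Definition mono (n : nat) := {ffun 'I_n -> nat}.
Definition mmul n (a b : mono n) : mono n := [ffun i => (a i + b i)%N].

(* A polynomial is represented by a finite formal sum of terms c * x^m;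
   two representations denote the same polynomial iff all coefficients agree. *)
Definition poly (K : fieldType) (n : nat) := seq (K * mono n).
Definition coef (K : fieldType) n (p : poly K n) (m : mono n) : K :=
  \sum_(t <- p | t.2 == m) t.1.
Definition peq (K : fieldType) n (p q : poly K n) : Prop :=
  forall m, coef p m = coef q m.
Definition padd (K : fieldType) n (p q : poly K n) : poly K n := p ++ q.
Definition pmul (K : fieldType) n (p q : poly K n) : poly K n :=
  [seq (t.1 * s.1, mmul t.2 s.2) | t <- p, s <- q].
Definition pmono (K : fieldType) n (m : mono n) : poly K n := [:: (1, m)].

Definition ideal (K : fieldType) n := poly K n -> Prop.

Definition ideal_gen (K : fieldType) n (gens : poly K n -> Prop) : ideal K n :=
  fun f => exists hs : seq (poly K n * poly K n),
    (forall h, h \in hs -> gens h.2) /\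
    peq f (flatten [seq pmul h.1 h.2 | h <- hs]).

Definition colon (K : fieldType) n (I J : ideal K n) : ideal K n :=
  fun f => forall g, J g -> I (pmul f g).

Definition ideal_eq (K : fieldType) n (I J : ideal K n) : Prop :=
  forall f, I f <-> J f.

Definition simple_graph n (e : rel 'I_n) : Prop :=
  (forall i, ~~ e i i) /\ (forall i j, e i j = e j i).

Definition no_isolated_vertex n (e : rel 'I_n) : Prop :=
  forall i, exists j, e i j.

Definition is_matching n (e : rel 'I_n) (s : seq ('I_n * 'I_n)) : bool :=
  all (fun p => e p.1 p.2) s && uniq (flatten [seq [:: p.1; p.2] | p <- s]).

Definition has_matching n (e : rel 'I_n) (k : nat) : bool :=
  [exists s : k.-tuple ('I_n * 'I_n), is_matching e s].

(* Matching number nu(G) (a matching has at most n edges). *)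
Definition matching_number n (e : rel 'I_n) : nat :=
  \max_(k < n.+1 | has_matching e k) k.

(* The monomial e_1 ... e_k of a matching (edge {i,j} <-> x_i x_j). *)
Definition matching_mono n (s : seq ('I_n * 'I_n)) : mono n :=
  [ffun v => \sum_(p <- s) ((p.1 == v) + (p.2 == v))%N].

Definition matching_power (K : fieldType) n (e : rel 'I_n) (k : nat) : ideal K n :=
  ideal_gen (fun g => exists s : seq ('I_n * 'I_n),
    [/\ size s = k, is_matching e s & g = pmono K (matching_mono s)]).
Arguments matching_power K {n} e k.

(* Main.v *)
Require Import Defs.
From mathcomp Require Import all_boot all_order all_algebra.
From Stdlib Require Import Classical.
Set Implicit Arguments. Unset Strict Implicit. Unset Printing Implicit Defensive.
Import GRing.Theory.

Ltac kill := match goal with H : is_true (?x != ?x) |- _ => by rewrite eqxx in H end.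
Ltac cl := solve [ assumption | rewrite eq_sym; assumption ].
Definition Inst (P : Prop) := P.
Ltac leaf := match goal with H : Inst ?P |- False => apply: (H : P); cl end.
Ltac bf := first [ kill
  | match goal with H : _ = _ \/ _ |- _ =>
      case: H => [?|[?|[?|[?|[? ? ? ? ?]]]]]; subst; bf end
  | leaf ].
Ltac destr_and := repeat match goal with H : is_true (_ && _) |- _ => case/andP: H => ? ? end.

Ltac prep0 := match goal with U : is_true (uniq _), A : is_true (all _ _) |- _ =>
move: A => /= A; destr_and;
repeat match goal with H : is_true (?S ?x || _) |- _ => move/memT: H => H end;
move: U; rewrite /= !inE !negb_or => U; destr_and end.
Ltac prep := prep0; bf.

Section G.
Variables (n : nat) (e : rel 'I_n) (Sp : pred 'I_n).

Lemma memT (a b c d x : 'I_n) : Sp x || (x \in [:: a; b; c; d]) ->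
  x = a \/ x = b \/ x = c \/ x = d \/ [/\ Sp x, x != a, x != b, x != c & x != d].
Proof.
case: (eqVneq x a) => [->|xa]; first by left.
case: (eqVneq x b) => [->|xb]; first by right; left.
case: (eqVneq x c) => [->|xc]; first by right; right; left.
case: (eqVneq x d) => [->|xd]; first by right; right; right; left.
rewrite !inE (negPf xa) (negPf xb) (negPf xc) (negPf xd) !orbF => Sx.
by right; right; right; right; split.
Qed.

Lemma caseB1 p q a b u1 v1 u2 v2 u3 v3 :
  (forall x y z w, e x y -> e z w -> x != z -> x != w -> y != z -> y != w ->
     Sp x -> Sp y -> Sp z -> Sp w -> False) ->
  Sp p -> Sp q -> Sp a ->
  e u1 v1 -> e u2 v2 -> e u3 v3 -> uniq [:: u1; v1; u2; v2; u3; v3] ->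
  all (fun x => Sp x || (x \in [:: p; q; a; b])) [:: u1; v1; u2; v2; u3; v3] -> False.
Proof.
move=> NS Sp_ Sq Sa E1 E2 E3 U A.
have N12 : Inst _ := NS _ _ _ _ E1 E2; have N13 : Inst _ := NS _ _ _ _ E1 E3; have N23 : Inst _ := NS _ _ _ _ E2 E3.
clear NS.
prep.
Qed.

Lemma caseB2 p q a b u1 v1 u2 v2 u3 v3 :
  (forall x y, e x y = e y x) ->
  (forall x y z w, e x y -> e z w -> x != z -> x != w -> y != z -> y != w ->
     Sp x -> Sp y -> Sp z -> Sp w -> False) ->
  (forall x y, e x y -> Sp x -> x != p -> x != q -> y != p -> y != q -> False) ->
  Sp p -> Sp q -> a != p -> a != q -> b != p -> b != q ->
  e u1 v1 -> e u2 v2 -> e u3 v3 -> uniq [:: u1; v1; u2; v2; u3; v3] ->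
  all (fun x => Sp x || (x \in [:: p; q; a; b])) [:: u1; v1; u2; v2; u3; v3] -> False.
Proof.
move=> sym NS NB Sp_ Sq ap aq bp bq E1 E2 E3 U A.
have E1' : e v1 u1 by rewrite sym. have E2' : e v2 u2 by rewrite sym.
have E3' : e v3 u3 by rewrite sym.
have N12 : Inst _ := NS _ _ _ _ E1 E2; have N13 : Inst _ := NS _ _ _ _ E1 E3; have N23 : Inst _ := NS _ _ _ _ E2 E3.
have B1 : Inst _ := NB _ _ E1; have B2 : Inst _ := NB _ _ E2; have B3 : Inst _ := NB _ _ E3.
have B1' : Inst _ := NB _ _ E1'; have B2' : Inst _ := NB _ _ E2'; have B3' : Inst _ := NB _ _ E3'.
clear NS NB sym.
prep.
Qed.

Lemma caseC1 p q a b u1 v1 u2 v2 u3 v3 :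
  (forall x y, e x y -> Sp x -> Sp y -> False) ->
  Sp p -> Sp a ->
  e u1 v1 -> e u2 v2 -> e u3 v3 -> uniq [:: u1; v1; u2; v2; u3; v3] ->
  all (fun x => Sp x || (x \in [:: p; q; a; b])) [:: u1; v1; u2; v2; u3; v3] -> False.
Proof.
move=> NI Sp_ Sa E1 E2 E3 U A.
have I1 : Inst _ := NI _ _ E1; have I2 : Inst _ := NI _ _ E2; have I3 : Inst _ := NI _ _ E3.
clear NI.
prep.
Qed.

Lemma caseC2 p q a b u1 v1 u2 v2 u3 v3 :
  (forall x y, e x y = e y x) ->
  (forall x y, e x y -> Sp x -> Sp y -> False) ->
  (forall x y z w, e x y -> e z w -> Sp x -> Sp z -> x != z -> x != w -> y != z -> y != w -> False) ->
  Sp p ->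
  e u1 v1 -> e u2 v2 -> e u3 v3 -> uniq [:: u1; v1; u2; v2; u3; v3] ->
  all (fun x => Sp x || (x \in [:: p; q; a; b])) [:: u1; v1; u2; v2; u3; v3] -> False.
Proof.
move=> sym NI NC Sp_ E1 E2 E3 U A.
have E1' : e v1 u1 by rewrite sym. have E2' : e v2 u2 by rewrite sym.
have E3' : e v3 u3 by rewrite sym.
have I1 : Inst _ := NI _ _ E1; have I2 : Inst _ := NI _ _ E2; have I3 : Inst _ := NI _ _ E3.
have C12a : Inst _ := NC _ _ _ _ E1 E2; have C12b : Inst _ := NC _ _ _ _ E1' E2;
have C12c : Inst _ := NC _ _ _ _ E1 E2'; have C12d : Inst _ := NC _ _ _ _ E1' E2'.
have C13a : Inst _ := NC _ _ _ _ E1 E3; have C13b : Inst _ := NC _ _ _ _ E1' E3;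
have C13c : Inst _ := NC _ _ _ _ E1 E3'; have C13d : Inst _ := NC _ _ _ _ E1' E3'.
have C23a : Inst _ := NC _ _ _ _ E2 E3; have C23b : Inst _ := NC _ _ _ _ E2' E3;
have C23c : Inst _ := NC _ _ _ _ E2 E3'; have C23d : Inst _ := NC _ _ _ _ E2' E3'.
clear NI NC sym.
prep.
Qed.

Lemma caseD p q a b u1 v1 u2 v2 u3 v3 :
  (forall x y, e x y = e y x) ->
  (forall x y, e x y -> Sp x -> False) ->
  e u1 v1 -> e u2 v2 -> e u3 v3 -> uniq [:: u1; v1; u2; v2; u3; v3] ->
  all (fun x => Sp x || (x \in [:: p; q; a; b])) [:: u1; v1; u2; v2; u3; v3] -> False.
Proof.
move=> sym ND E1 E2 E3 U A.
have E1' : e v1 u1 by rewrite sym. have E2' : e v2 u2 by rewrite sym.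
have E3' : e v3 u3 by rewrite sym.
have D1 : Inst _ := ND _ _ E1; have D2 : Inst _ := ND _ _ E2; have D3 : Inst _ := ND _ _ E3.
have D1' : Inst _ := ND _ _ E1'; have D2' : Inst _ := ND _ _ E2'; have D3' : Inst _ := ND _ _ E3'.
clear ND sym.
prep.
Qed.
End G.


Section G2.
Variables (n : nat) (e : rel 'I_n).

Definition vert (s : seq ('I_n * 'I_n)) := flatten [seq [:: p.1; p.2] | p <- s].
Definition Dsupp k (T : pred 'I_n) :=
  exists s, [/\ size s = k, is_matching e s & all T (vert s)].

Lemma get3 T j : (2 < j)%N -> Dsupp j T ->
  exists u1 v1 u2 v2 u3 v3, [/\ e u1 v1, e u2 v2, e u3 v3,
    uniq [:: u1; v1; u2; v2; u3; v3] & all T [:: u1; v1; u2; v2; u3; v3]].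
Proof.
move=> hj [s [sz /andP[Ae Us] AT]]; rewrite -sz in hj.
case: s {sz} hj Ae Us AT => [|[u1 v1] [|[u2 v2] [|[u3 v3] r]]]; [by []|by []|by []|move=> _ Ae Us AT].
exists u1, v1, u2, v2, u3, v3.
move: Ae => /and4P[-> -> -> _]; split => //.
  by move: Us; rewrite /vert -[flatten _]/([:: u1; v1; u2; v2; u3; v3] ++ vert r) cat_uniq => /andP[].
by move: AT; rewrite /vert -[flatten _]/([:: u1; v1; u2; v2; u3; v3] ++ vert r) all_cat => /andP[].
Qed.

Lemma avoid2 x1 y1 x2 y2 x3 y3 (p q : 'I_n) : e x1 y1 -> e x2 y2 -> e x3 y3 ->
  uniq [:: x1; y1; x2; y2; x3; y3] ->
  exists a b, e a b /\ [&& a != p, a != q, b != p & b != q].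
Proof.
move=> E1 E2 E3 U.
case: (boolP [&& x1 != p, x1 != q, y1 != p & y1 != q]) => [h|h1]; first by exists x1, y1.
case: (boolP [&& x2 != p, x2 != q, y2 != p & y2 != q]) => [h|h2]; first by exists x2, y2.
case: (boolP [&& x3 != p, x3 != q, y3 != p & y3 != q]) => [h|h3]; first by exists x3, y3.
exfalso; move: U; rewrite /= !inE !negb_or => U; destr_and.
move: h1 h2 h3; rewrite !negb_and !negbK.
case/or4P => /eqP ?; case/or4P => /eqP ?; case/or4P => /eqP ?; subst; kill.
Qed.

Lemma matching2 a b c d : (forall i, ~~ e i i) -> e a b -> e c d ->
  a != c -> a != d -> b != c -> b != d -> is_matching e [:: (a, b); (c, d)].
Proof.
move=> irr ab cd ac ad bc bd.
have nab : a != b by apply/eqP => h; move: (irr a); rewrite {2}h ab.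
have ncd : c != d by apply/eqP => h; move: (irr c); rewrite {2}h cd.
by rewrite /is_matching /= ab cd /= !inE !negb_or nab ac ad bc bd ncd.
Qed.

Lemma uniq6 (x1 y1 x2 y2 x3 y3 : 'I_n) : uniq [:: x1; y1; x2; y2; x3; y3] ->
  [&& x1 != x2, x1 != y2, y1 != x2 & y1 != y2].
Proof. by rewrite /= !inE !negb_or => U; destr_and; apply/and4P; split. Qed.

Lemma comb k (Sp : pred 'I_n) : simple_graph e -> (2 < k)%N ->
  (exists x1 y1 x2 y2 x3 y3, [/\ e x1 y1, e x2 y2, e x3 y3 & uniq [:: x1; y1; x2; y2; x3; y3]]) ->
  (forall a b c d, is_matching e [:: (a, b); (c, d)] ->
     Dsupp k (fun v => Sp v || (v \in [:: a; b; c; d]))) -> Dsupp k Sp.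
Proof.
move=> [irr sym] hk [x1 [y1 [x2 [y2 [x3 [y3 [F1 F2 F3 FU]]]]]]] H.
have H3 : forall a b c d, e a b -> e c d -> a != c -> a != d -> b != c -> b != d ->
  exists u1 v1 u2 v2 u3 v3, [/\ e u1 v1, e u2 v2, e u3 v3, uniq [:: u1; v1; u2; v2; u3; v3]
    & all (fun v => Sp v || (v \in [:: a; b; c; d])) [:: u1; v1; u2; v2; u3; v3]].
  move=> a b c d ab cd ac ad bc bd; apply: get3 hk _; apply: H; exact: matching2.
case: (classic (exists a b c d, [/\ e a b, e c d, [&& a != c, a != d, b != c & b != d]
     & [&& Sp a, Sp b, Sp c & Sp d]])) =>
   [[a [b [c [d [ab cd /and4P[ac ad bc bd] /and4P[Sa Sb Sc Sd]]]]]]|nA].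
  have [s [sz ms AT]] := H a b c d (matching2 irr ab cd ac ad bc bd).
  exists s; split => //; apply: sub_all AT => v /orP[//|].
  by rewrite !inE => /or4P[] /eqP->.
have NS : forall x y z w, e x y -> e z w -> x != z -> x != w -> y != z -> y != w ->
     Sp x -> Sp y -> Sp z -> Sp w -> False.
  move=> x y z w xy zw xz xw yz yw Sx Sy Sz Sw; apply: nA; exists x, y, z, w.
  by split => //; apply/and4P; split.
exfalso.
case: (classic (exists p q, [/\ e p q, Sp p & Sp q])) => [[p [q [pq Sp_ Sq]]]|nB].
  case: (classic (exists a b, [/\ e a b, Sp a & [&& a != p, a != q, b != p & b != q]])) =>
     [[a [b [ab Sa /and4P[ap aq bp bq]]]]|nB1].
    have [u1 [v1 [u2 [v2 [u3 [v3 [E1 E2 E3 U A]]]]]]] :=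
      H3 p q a b pq ab ltac:(by rewrite eq_sym) ltac:(by rewrite eq_sym)
        ltac:(by rewrite eq_sym) ltac:(by rewrite eq_sym).
    exact: (caseB1 NS Sp_ Sq Sa E1 E2 E3 U A).
  have NB : forall x y, e x y -> Sp x -> x != p -> x != q -> y != p -> y != q -> False.
    move=> x y xy Sx xp xq yp yq; apply: nB1; exists x, y; split => //.
    by apply/and4P; split.
  have [a [b [ab /and4P[ap aq bp bq]]]] := avoid2 p q F1 F2 F3 FU.
  have [u1 [v1 [u2 [v2 [u3 [v3 [E1 E2 E3 U A]]]]]]] :=
      H3 p q a b pq ab ltac:(by rewrite eq_sym) ltac:(by rewrite eq_sym)
        ltac:(by rewrite eq_sym) ltac:(by rewrite eq_sym).
  exact: (caseB2 sym NS NB Sp_ Sq ap aq bp bq E1 E2 E3 U A).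
have NI : forall x y, e x y -> Sp x -> Sp y -> False.
  by move=> x y xy Sx Sy; apply: nB; exists x, y.
case: (classic (exists s1 t1 s2 t2, [/\ e s1 t1, e s2 t2, Sp s1, Sp s2
     & [&& s1 != s2, s1 != t2, t1 != s2 & t1 != t2]])) =>
   [[s1 [t1 [s2 [t2 [st1 st2 S1 S2 /and4P[h1 h2 h3 h4]]]]]]|nC1].
  have [u1 [v1 [u2 [v2 [u3 [v3 [E1 E2 E3 U A]]]]]]] := H3 s1 t1 s2 t2 st1 st2 h1 h2 h3 h4.
  exact: (caseC1 NI S1 S2 E1 E2 E3 U A).
have NC : forall x y z w, e x y -> e z w -> Sp x -> Sp z -> x != z -> x != w -> y != z ->
    y != w -> False.
  move=> x y z w xy zw Sx Sz xz xw yz yw; apply: nC1; exists x, y, z, w; split => //.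
  by apply/and4P; split.
case: (classic (exists s t, e s t /\ Sp s)) => [[s [t [st Ss]]]|nC2].
  have [a [b [ab /and4P[ap aq bp bq]]]] := avoid2 s t F1 F2 F3 FU.
  have [u1 [v1 [u2 [v2 [u3 [v3 [E1 E2 E3 U A]]]]]]] :=
      H3 s t a b st ab ltac:(by rewrite eq_sym) ltac:(by rewrite eq_sym)
        ltac:(by rewrite eq_sym) ltac:(by rewrite eq_sym).
  exact: (caseC2 sym NI NC Ss E1 E2 E3 U A).
have ND : forall x y, e x y -> Sp x -> False.
  by move=> x y xy Sx; apply: nC2; exists x, y.
have /and4P[g1 g2 g3 g4] := uniq6 FU.
have [u1 [v1 [u2 [v2 [u3 [v3 [E1 E2 E3 U A]]]]]]] := H3 x1 y1 x2 y2 F1 F2 g1 g2 g3 g4.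
exact: (caseD sym ND E1 E2 E3 U A).
Qed.
End G2.

Local Open Scope ring_scope.

Section P.
Variables (K : fieldType) (n : nat).
Implicit Types (p q : Defs.poly K n) (m w : mono n).

Lemma nz_sum (I : eqType) (r : seq I) (P : pred I) (F : I -> K) :
  \sum_(i <- r | P i) F i != 0 -> exists2 i, i \in r & P i && (F i != 0).
Proof.
case: (boolP (has (fun i => P i && (F i != 0)) r)) => [/hasP[i ir Pi]|/hasPn H].
  by exists i.
rewrite big1_seq ?eqxx // => i /andP[Pi ir]; move: (H i ir); rewrite Pi /= negbK.
by move/eqP.
Qed.

Lemma nz_sum0 (I : eqType) (r : seq I) (F : I -> K) :
  \sum_(i <- r) F i != 0 -> exists2 i, i \in r & F i != 0.
Proof. by move/nz_sum => [i ir /= H]; exists i. Qed.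

Lemma coef_flatten (L : seq (Defs.poly K n)) m : Defs.coef (flatten L) m = \sum_(p <- L) Defs.coef p m.
Proof. by rewrite /Defs.coef big_flatten. Qed.

Lemma pmul_mono p w : pmul p (pmono K w) = [seq (t.1, mmul t.2 w) | t <- p].
Proof. by rewrite /pmul /pmono; elim: p => [|t p IH] //=; rewrite mulr1 IH. Qed.

Lemma mmulI w : injective (fun m => mmul m w).
Proof.
move=> a b /= /ffunP H; apply/ffunP => i; move: (H i); rewrite !ffunE; exact: addIn.
Qed.

Lemma coef_pmul_mono p w m : Defs.coef (pmul p (pmono K w)) (mmul m w) = Defs.coef p m.
Proof.
rewrite pmul_mono /Defs.coef big_map; apply: eq_bigl => t /=.
by rewrite (inj_eq (@mmulI w)).
Qed.

Lemma coef_pmul p q m :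
  Defs.coef (pmul p q) m = \sum_(t <- p) t.1 * \sum_(s <- q | mmul t.2 s.2 == m) s.1.
Proof.
rewrite /Defs.coef /pmul; elim: p => [|t p IH]; first by rewrite !big_nil.
rewrite /= big_cat big_cons -IH big_map mulr_sumr; congr (_ + _).
Qed.

Lemma group_sum p (F : mono n -> K) :
  \sum_(t <- p) t.1 * F t.2 = \sum_(x <- undup (map snd p)) Defs.coef p x * F x.
Proof.
rewrite /Defs.coef.
transitivity (\sum_(x <- undup (map snd p)) \sum_(t <- p | t.2 == x) t.1 * F t.2); last first.
  by apply: eq_bigr => x _; rewrite mulr_suml; apply: eq_bigr => t /eqP->.
under [RHS]eq_bigr do rewrite big_mkcond /=.
rewrite exchange_big /=; apply: eq_big_seq => t tp.
have tin : t.2 \in undup (map snd p).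
  by rewrite mem_undup; apply: map_f.
rewrite (bigD1_seq t.2) ?undup_uniq //= eqxx big1 ?addr0 // => x /negPf.
by rewrite eq_sym => ->.
Qed.

Definition Dm (e : rel 'I_n) (k : nat) (M : mono n) :=
  exists s, [/\ size s = k, is_matching e s & forall v, (matching_mono s v <= M v)%N].

Lemma memb_to e k F M : matching_power K e k F -> Defs.coef F M != 0 -> Dm e k M.
Proof.
case=> hs [Hg Hp]; rewrite Hp coef_flatten big_map => /nz_sum0 [h hin].
case: (Hg h hin) => s [sz ms ->].
rewrite pmul_mono /Defs.coef big_map => /nz_sum [t tin /andP[/eqP <- _]].
exists s; split=> // v; apply: leq_trans (leq_addl (t.2 v) _) _; by rewrite /= [in X in (_ <= X)%N]ffunE.
Qed.

Lemma memb_from e k F : (forall M, Defs.coef F M != 0 -> Dm e k M) ->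
  matching_power K e k F.
Proof.
move=> H.
pose P := fun t : K * mono n => Defs.coef F t.2 != 0.
have peqF : peq F [seq t <- F | P t].
  move=> m; rewrite {2}/Defs.coef big_filter_cond.
  case: (boolP (Defs.coef F m != 0)) => hm.
    rewrite /Defs.coef; apply: eq_bigl => t /=; rewrite /P; case: (t.2 =P m) => [->|]; by rewrite ?hm ?andbF.
  rewrite (eqP (negbNE hm)) big_pred0 // => t; rewrite /P; case: (t.2 =P m) => [->|]; by rewrite ?(negbTE hm) ?andbF.
suff [hs [Hg Hf]] : exists hs : seq (Defs.poly K n * Defs.poly K n),
    (forall h, h \in hs -> (fun g => exists s : seq ('I_n * 'I_n),
    [/\ size s = k, is_matching e s & g = pmono K (matching_mono s)]) h.2) /\
    flatten [seq pmul h.1 h.2 | h <- hs] = [seq t <- F | P t].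
  by exists hs; split=> //; rewrite Hf.
have : all P [seq t <- F | P t] by apply: filter_all.
elim: [seq t <- F | P t] => [|t l IH] /=; first by exists [::].
case/andP=> Pt /IH [hs [Hg Hf]].
case: (H _ Pt) => s [sz ms le].
pose w := matching_mono s.
exists (([:: (t.1, [ffun v => (t.2 v - w v)%N])], pmono K w) :: hs); split.
  move=> h; rewrite inE => /orP[/eqP->|/Hg //]; by exists s.
rewrite /= Hf mulr1; congr (_ :: _).
case: t Pt le => c m Pt le /=; congr (c, _); apply/ffunP => v; rewrite !ffunE subnK //; move: (le v); rewrite ffunE; apply.
Qed.
End P.


Section M.
Variables (n : nat) (e : rel 'I_n).

Lemma mm_count (s : seq ('I_n * 'I_n)) v : matching_mono s v = count_mem v (vert s).
Proof.
rewrite ffunE; elim: s => [|x s IH]; first by rewrite big_nil.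
by rewrite big_cons /= IH addnA.
Qed.

Lemma count_pos (v : 'I_n) l : (0 < count_mem v l)%N = (v \in l).
Proof. by rewrite -has_count has_pred1. Qed.

Lemma Dm_to_supp k (M : mono n) : Dm e k M -> Dsupp e k (fun v => (0 < M v)%N).
Proof.
case=> s [sz ms le]; exists s; split => //; apply/allP => v vin.
by apply: leq_trans (le v); rewrite mm_count count_pos.
Qed.

Lemma supp_to_Dm k (M : mono n) : Dsupp e k (fun v => (0 < M v)%N) -> Dm e k M.
Proof.
case=> s [sz ms AT]; exists s; split => // v.
rewrite mm_count count_uniq_mem; last by case/andP: ms.
by case: (boolP (v \in vert s)) => // vin; move/allP: AT => /(_ v vin).
Qed.

Lemma Dsupp_mono k (T T' : pred 'I_n) : (forall v, T v -> T' v) -> Dsupp e k T -> Dsupp e k T'.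
Proof. by move=> H [s [sz ms AT]]; exists s; split => //; apply: sub_all AT. Qed.

Lemma three k : (2 < k)%N -> (k <= matching_number e)%N ->
  exists x1 y1 x2 y2 x3 y3, [/\ e x1 y1, e x2 y2, e x3 y3 & uniq [:: x1; y1; x2; y2; x3; y3]].
Proof.
move=> hk hnu.
have [j /andP[hm kj]] : exists j : 'I_n.+1, has_matching e j && (k <= j)%N.
  apply/existsP; move: hnu; apply: contraLR; rewrite negb_exists => /forallP H.
  have k0 : (0 < k)%N by apply: leq_trans hk.
  rewrite -ltnNge -(prednK k0) ltnS; apply/bigmax_leqP => i hi.
  move: (H i); rewrite hi /= -ltnNge => ik; by rewrite -ltnS prednK.
case/existsP: hm => t mt.
have [u1 [v1 [u2 [v2 [u3 [v3 [E1 E2 E3 U _]]]]]]] :=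
  @get3 n e predT j (leq_trans hk kj) (ex_intro _ (tval t) (And3 (size_tuple t) mt (all_predT _))).
by exists u1, v1, u2, v2, u3, v3.
Qed.
End M.

Theorem theorem6p2 (K : fieldType) (n : nat) (e : rel 'I_n) (k : nat) :
  simple_graph e -> no_isolated_vertex e ->
  (2 < k)%N -> (k <= matching_number e)%N ->
  ideal_eq (colon (matching_power K e k) (matching_power K e 2))
           (matching_power K e k).
Proof.
move=> sg _ hk hnu f; split.
  move=> Hc; apply: memb_from => M hM; apply: supp_to_Dm.
  apply: (@comb n e k (fun v => (0 < M v)%N) sg hk (three hk hnu)).
  move=> a b c d mab.
  pose w := matching_mono [:: (a, b); (c, d)].
  pose z : mono n := [ffun _ => 0%N].
  have g2 : matching_power K e 2 (pmono K w).
    exists [:: ([:: (1, z)], pmono K w)]; split.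
      by move=> h; rewrite inE => /eqP-> /=; exists [:: (a, b); (c, d)].
    move=> m; rewrite /= mulr1.
    have -> : mmul z w = w by apply/ffunP => v; rewrite !ffunE add0n.
    done.
  have := @memb_to K n e k _ (mmul M w) (Hc _ g2); rewrite coef_pmul_mono => /(_ hM) D.
  apply: Dsupp_mono (Dm_to_supp D) => v; rewrite ffunE addn_gt0 => /orP[->//|].
  by rewrite mm_count count_pos /= => ->; rewrite orbT.
move=> Hf g _; apply: memb_from => M.
rewrite coef_pmul (group_sum f (fun x => \sum_(s <- g | mmul x s.2 == M) s.1)).
case/nz_sum0 => x xin; rewrite mulf_eq0 negb_or => /andP[cx /nz_sum [s sin /andP[/eqP xs _]]].
have [sm [sz ms le]] := memb_to Hf cx.
exists sm; split => // v; rewrite -xs [in X in (_ <= X)%N]ffunE; exact: leq_trans (le v) (leq_addr _ _).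
Qed.
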